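(* Consider Algorithm 3 (see context) run on any arrival sequence, and let $C_{\min}=\min_l C_l$. Whenever a packet $m$ is scheduled, let $\Delta D$ be the resulting increase in the dual objective $\sum_{m'}\alpha_{m'}+\sum_{l,t}C_l\beta_{lt}$, which increases by $\alpha_m$ plus the changes in $C_l\beta_{lt}$ for $(l,t)\in k^*$. The corresponding increase of the primal objective $\sum_{m,k}X_{mk}$ is $1$. Then $$\Delta D\le 2(\ln L+1)+\frac{B}{C_{\min}},$$ where $B<\infty$ is a constant that depends on $L$ but not on $C_{\min}$.
   Context: Network model. The network is a directed graph with a finite set $\mathcal L$ of links. Each link $l$ has an integer capacity $C_l\ge1$ (packets per time slot). Time is slotted, $t=1,2,\dots$. $\mathcal M$ is a finite set of packets. Packet $m$ has a source node $s_m$, a destination node $\mathrm{dst}_m$, an arrival slot $a_m$ and a deadline slot $f_m$. Valid schedules. A valid schedule for $m$ is a set $k=\{(l_1,t_1),\dots,(l_j,t_j)\}$ of (link, slot) pairs satisfying two conditions: $l_1,\dots,l_j$ form a directed path from $s_m$ to $\mathrm{dst}_m$, and $a_m\le t_1<t_2<\dots<t_j\le f_m$. $V(m)$ denotes the set of valid schedules of $m$. $L\ge1$ is an integer with $|k|\le L$ for all $m\in\mathcal M$, $k\in V(m)$. Define the function $$g_L(x)=\begin{cases}\dfrac{e^{x}-1}{L\,(e^{1/(\ln L+1)}-1)}, & 0\le x\le \frac{1}{\ln L+1},\\[2mm] e^{(x-1)(\ln L+1)}, & x\ge\frac{1}{\ln L+1}.\end{cases}$$ Algorithm 3. 1. Initialize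 all $\alpha_m,X_{mk}$ to $0$. For each link $l$ and slot $t$, let $n_{lt}$ be the number of packets scheduled so far on $(l,t)$ (initially $0$), and maintain $\beta_{lt}=g_L(n_{lt}/C_l)$ (initially $0$). 2. For each arriving packet $m$ in order: - Let $k^*\in\arg\max_{k\in V(m)}\big(1-\sum_{(l,t)\in k}\beta_{lt}\big)$. - If $1-\sum_{(l,t)\in k^*}\beta_{lt}>0$, do the following. Set $\alpha_m=1-\sum_{(l,t)\in k^*}\beta_{lt}$, using current values. For each $(l,t)\in k^*$ increment $n_{lt}$ by one and reset $\beta_{lt}=g_L(n_{lt}/C_l)$. Set $X_{mk^*}=1$, and transmit $m$ along $k^*$. - Otherwise, drop $m$. *)

(* Defs.v *)
From Stdlib Require Import Reals List Arith.
Import ListNotations.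
Open Scope R_scope.

Record Network := {
  links : list nat;
  lsrc  : nat -> nat;
  ldst  : nat -> nat;
  cap   : nat -> nat
}.

Record Packet := {
  psrc  : nat;
  pdst  : nat;
  parr  : nat;
  pdead : nat
}.

(* A schedule: the (link, slot) pairs listed in path order. *)
Definition Sched := list (nat * nat).

Definition valid_schedule (net : Network) (m : Packet) (k : Sched) : Prop :=
  k <> [] /\
  Forall (fun p => In (fst p) (links net)) k /\
  lsrc net (fst (nth 0 k (0%nat,0%nat))) = psrc m /\
  ldst net (fst (last k (0%nat,0%nat))) = pdst m /\
  (forall i, (S i < length k)%nat ->
     ldst net (fst (nth i k (0%nat,0%nat))) = lsrc net (fst (nth (S i) k (0%nat,0%nat)))) /\
  (* directed path: no repeated vertices *)
  NoDup (lsrc net (fst (nth 0 k (0%nat,0%nat))) :: map (fun p => ldst net (fst p)) k) /\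
  (parr m <= snd (nth 0 k (0%nat,0%nat)))%nat /\
  (forall i, (S i < length k)%nat ->
     (snd (nth i k (0%nat,0%nat)) < snd (nth (S i) k (0%nat,0%nat)))%nat) /\
  (snd (last k (0%nat,0%nat)) <= pdead m)%nat.

Definition gL (L : nat) (x : R) : R :=
  let c := 1 / (ln (INR L) + 1) in
  if Rle_dec x c then (exp x - 1) / (INR L * (exp c - 1))
  else exp ((x - 1) * (ln (INR L) + 1)).

(* Algorithm state: n_{lt} = number of packets scheduled on (l,t). *)
Definition State := nat -> nat -> nat.

Definition state0 : State := fun _ _ => 0%nat.

Definition beta (net : Network) (L : nat) (n : State) (l t : nat) : R :=
  gL L (INR (n l t) / INR (cap net l)).

Definition sum_beta (net : Network) (L : nat) (n : State) (k : Sched) : R :=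
  fold_right (fun p acc => beta net L n (fst p) (snd p) + acc) 0 k.

Definition pair_eq_dec : forall x y : nat * nat, {x = y} + {x <> y}.
Proof. decide equality; apply Nat.eq_dec. Defined.

Definition incr (k : Sched) (n : State) : State :=
  fun l t => (n l t + count_occ pair_eq_dec k (l, t))%nat.

Inductive alg_step (net : Network) (L : nat) (n : State) (m : Packet)
  : State -> option Sched -> Prop :=
| step_sched (k : Sched) :
    valid_schedule net m k ->
    (forall k', valid_schedule net m k' ->
       1 - sum_beta net L n k' <= 1 - sum_beta net L n k) ->
    0 < 1 - sum_beta net L n k ->
    alg_step net L n m (incr k n) (Some k)
| step_drop :
    (forall k', valid_schedule net m k' -> 1 - sum_beta net L n k' <= 0) ->
    alg_step net L n m n None.

Inductive alg_run (net : Network) (L : nat) : list Packet -> State -> Prop :=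
| run_nil : alg_run net L [] state0
| run_snoc (ms : list Packet) (m : Packet) (n n' : State) (o : option Sched) :
    alg_run net L ms n -> alg_step net L n m n' o ->
    alg_run net L (ms ++ [m]) n'.

Definition deltaD (net : Network) (L : nat) (n : State) (k : Sched) : R :=
  (1 - sum_beta net L n k) +
  fold_right (fun p acc =>
     INR (cap net (fst p)) *
       (beta net L (incr k n) (fst p) (snd p) - beta net L n (fst p) (snd p)) + acc)
    0 k.

(* Main.v *)
Require Import Defs.
From Stdlib Require Import Reals List Arith Lra Lia Sorting.
Import ListNotations.
Open Scope R_scope.

Lemma exp_le' x y : x <= y -> exp x <= exp y.
Proof. intro H; destruct (Rle_lt_or_eq_dec _ _ H) as [H'|H'].
 left; apply exp_increasing; auto. subst; lra. Qed.

Lemma exp_m1 z : 0 <= z -> exp z - 1 <= z * exp z.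
Proof. intro Hz. pose proof (exp_ineq1_le (-z)). rewrite exp_Ropp in H.
 pose proof (exp_pos z).
 assert (exp z * (1 + - z) <= exp z * / exp z) by (apply Rmult_le_compat_l; lra).
 rewrite Rinv_r in H1 by lra. nra. Qed.

Lemma exp_up z w : 0 <= z -> z <= w -> exp z <= 1 + z * exp w.
Proof. intros. pose proof (exp_m1 z H). pose proof (exp_le' _ _ H0). nra. Qed.

Definition Kc L := ln (INR L) + 1.
Definition Ac L := INR L * (exp (1 / Kc L) - 1).
Definition Mc L := exp 1 ^ 2 / Ac L + Kc L * exp 1 / Ac L + Kc L ^ 2 * exp (Kc L).

Lemma Kc_ge1 L : (1 <= L)%nat -> 1 <= Kc L.
Proof. intro H. unfold Kc. assert (1 <= INR L) by (apply (le_INR 1); auto).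
 destruct (Rle_lt_or_eq_dec _ _ H0). pose proof (ln_increasing 1 _ ltac:(lra) r). rewrite ln_1 in H1; lra.
 rewrite <- e, ln_1; lra. Qed.

Lemma Ac_pos L : (1 <= L)%nat -> 0 < Ac L.
Proof. intro H. pose proof (Kc_ge1 L H). unfold Ac.
 assert (1 <= INR L) by (apply (le_INR 1); auto).
 assert (0 < 1 / Kc L) by (apply Rdiv_lt_0_compat; lra).
 pose proof (exp_ineq1_le (1 / Kc L)). nra. Qed.

Lemma gL_nonneg L x : (1 <= L)%nat -> 0 <= x -> 0 <= gL L x.
Proof. intros HL Hx. pose proof (Ac_pos L HL). unfold gL; cbv zeta.
 fold (Kc L). fold (Ac L). destruct Rle_dec.
 - pose proof (exp_ineq1_le x). apply Rmult_le_pos; [lra|]. left; apply Rinv_0_lt_compat; lra.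
 - left; apply exp_pos. Qed.

Lemma step L x h : (1 <= L)%nat -> 0 <= x -> 0 < h <= 1 -> gL L x <= 1 ->
  gL L (x + h) - gL L x <= h * (Kc L * gL L x + 1 / Ac L + Mc L * h).
Proof.
 intros HL Hx Hh Hg1. pose proof (Kc_ge1 L HL) as HK. pose proof (Ac_pos L HL) as HA.
 pose proof (gL_nonneg L x HL Hx) as Hg0.
 assert (HLr: 1 <= INR L) by (apply (le_INR 1); auto).
 revert Hg0 Hg1. unfold Mc. unfold gL; cbv zeta. fold (Kc L). fold (Ac L).
 set (K := Kc L) in *. set (A := Ac L) in *. set (c := 1 / K).
 assert (Hc: c * K = 1) by (unfold c; field; lra).
 assert (Hc0: 0 < c) by (unfold c; apply Rdiv_lt_0_compat; lra).
 assert (Hc1: c <= 1) by (unfold c; apply Rmult_le_reg_r with K; [lra|]; unfold Rdiv; rewrite Rmult_assoc, Rinv_l; lra).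
 assert (HAdef : A = INR L * (exp c - 1)) by reflexivity.
 set (iA := / A). assert (HiA: A * iA = 1) by (unfold iA; field; lra).
 assert (HiA0: 0 < iA) by (unfold iA; apply Rinv_0_lt_compat; lra).
 assert (E: forall u, u / A = u * iA) by reflexivity.
 rewrite !E.
 pose proof (exp_pos x) as Ex0. pose proof (exp_ineq1_le x) as Ex1.
 pose proof (exp_pos 1) as E10. pose proof (exp_pos K) as EK0.
 pose proof (exp_pos h) as Eh0.
 destruct (Rle_dec (x + h) c) as [H1|H1]; destruct (Rle_dec x c) as [H2|H2]; try lra.
 - intros _ _. rewrite exp_plus.
   assert (exp h <= 1 + h * exp 1) by (apply exp_up; lra).
   assert (exp x <= exp 1) by (apply exp_le'; lra).
   assert (F0 := exp_m1 h ltac:(lra)).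
   assert (F1: exp h - 1 <= h + h^2 * exp 1) by nra.
   assert (F3: exp x * (exp h - 1) <= exp x * (h + h^2 * exp 1)) by (apply Rmult_le_compat_l; lra).
   assert (F4: h^2 * exp 1 * exp x <= h^2 * exp 1 * exp 1) by (apply Rmult_le_compat_l; [nra|lra]).
   assert (F: exp x * exp h - exp x <= h * exp x + h^2 * exp 1 ^ 2) by nra.
   assert (F2 := Rmult_le_compat_r iA _ _ (Rlt_le _ _ HiA0) F).
   assert (0 <= (K - 1) * (exp x - 1) * iA * h) by
     (apply Rmult_le_pos; [apply Rmult_le_pos; [apply Rmult_le_pos|]|]; lra).
   assert (0 <= h * h * K * exp 1 * iA) by
     (repeat apply Rmult_le_pos; lra).
   assert (0 <= h * h * K^2 * exp K) by
     (repeat apply Rmult_le_pos; try lra; nra).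
   assert (h^2 * exp 1 ^2 * iA = h * ((exp 1 ^2 * iA) * h)) by ring.
   nra.
 -
   intros _ _.
   set (y := x + h - c).
   assert (Ey: (x + h - 1) * K = (c - 1) * K + y * K) by (unfold y; ring).
   assert (EL: exp ((c - 1) * K) = / INR L).
   { replace ((c-1)*K) with (- ln (INR L)) by (assert (HKd: K = ln (INR L) + 1) by reflexivity; nra).
     rewrite exp_Ropp, exp_ln; lra. }
   rewrite Ey, exp_plus, EL.
   set (iL := / INR L). assert (HiL: INR L * iL = 1) by (unfold iL; field; lra).
   assert (HiL0 : 0 < iL) by (unfold iL; apply Rinv_0_lt_compat; lra).
   assert (HiL1 : iL <= 1) by (assert (iL * 1 <= iL * INR L) by (apply Rmult_le_compat_l; lra); lra).
   assert (Ecl: (exp c - 1) * iA = iL) by (unfold iA, iL; rewrite HAdef; pose proof (exp_ineq1_le c); field; split; lra).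
   assert (Hy: 0 < y <= h) by (unfold y; lra).
   assert (EyK := exp_m1 (y*K) ltac:(nra)).
   assert (Eyh : exp (y*K) <= 1 + h * K * exp K) by
     (assert (exp (y*K) <= 1 + (y*K) * exp K) by (apply exp_up; nra);
      assert (0 <= (h - y) * K * exp K) by (repeat apply Rmult_le_pos; lra); nra).
   assert (T1: iL * (exp (y*K) - 1) <= y * K * iL + h * h * K^2 * exp K).
   { assert (iL * (exp (y*K) - 1) <= iL * (y*K*exp (y*K))) by (apply Rmult_le_compat_l; lra).
     assert (0 <= y*K) by nra.
     assert (y * K * exp (y*K) <= y*K*(1 + h*K*exp K)) by (apply Rmult_le_compat_l; lra).
     assert (0 <= iL * (y*K) * (h*K*exp K)) by (repeat apply Rmult_le_pos; lra).
     assert (iL * (y*K) * (h*K*exp K) <= 1 * (h*K) * (h*K*exp K)).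
     { apply Rmult_le_compat_r. repeat apply Rmult_le_pos; lra.
       apply Rmult_le_compat; nra. }
     nra. }
   assert (Ecx: exp c = exp x * exp (c - x)) by (rewrite <- exp_plus; f_equal; ring).
   assert (T2: exp c - exp x <= (c - x) * exp c).
   { pose proof (exp_m1 (c - x) ltac:(lra)).
     rewrite Ecx. assert (exp x * (exp (c-x) - 1) <= exp x * ((c-x)*exp (c-x))) by (apply Rmult_le_compat_l; lra). nra. }
   assert (Ec1 : exp c <= exp 1) by (apply exp_le'; lra).
   assert (T2' : (exp c - exp x) * iA <= (c - x) * exp c * iA) by (apply Rmult_le_compat_r; lra).
   assert (T2'': (exp c - exp x) * iA <= h * exp 1 * iA).
   { assert ((c-x) * exp c <= h * exp 1) by (apply Rmult_le_compat; try lra; left; apply exp_pos). 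
     assert ((c - x) * exp c * iA <= h * exp 1 * iA) by (apply Rmult_le_compat_r; lra). lra. }
   assert (EciA: exp c * iA = iL + iA) by nra.
   assert (Eg: iL = (exp x - 1) * iA + (exp c - exp x) * iA) by nra.
   assert (S1: (exp c - exp x) * iA <= (c - x) * (iL + iA)) by nra.
   assert (S2: y * K * iL + (c - x) * (iL + iA) <= h * K * iL + h * iA).
   { assert (0 <= (c-x) * (K - 1) * iL) by (repeat apply Rmult_le_pos; lra).
     assert (0 <= y * iA) by nra.
     assert (h = y + (c - x)) by (unfold y; ring). nra. }
   assert (S3: K * iL <= K * ((exp x - 1) * iA) + K * (h * exp 1 * iA)) by nra.
   assert (S4: h * (K * iL) <= h * (K * ((exp x - 1) * iA) + K * (h * exp 1 * iA))) by (apply Rmult_le_compat_l; lra).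
   assert (iL * exp (y*K) - (exp x - 1) * iA = iL * (exp (y*K) - 1) + (exp c - exp x)*iA) by nra.
   assert (0 <= h * h * exp 1 ^2 * iA) by (repeat apply Rmult_le_pos; try lra; nra).
   assert (0 <= h * h * K * exp 1 * iA) by (repeat apply Rmult_le_pos; lra).
   assert (0 <= h * h * K^2 * exp K) by (repeat apply Rmult_le_pos; try lra; nra).
   nra.
 - intros Hg0 Hg1.
   assert (Ex: (x + h - 1) * K = (x - 1) * K + h * K) by ring.
   rewrite Ex, exp_plus. set (g := exp ((x-1)*K)) in *.
   assert (E1 := exp_m1 (h*K) ltac:(nra)).
   assert (E2 : exp (h*K) <= 1 + h*K*exp K) by (apply exp_up; nra).
   assert (g * (exp (h*K) - 1) <= g * (h*K*exp (h*K))) by (apply Rmult_le_compat_l; lra).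
   assert (h*K*exp (h*K) <= h*K*(1 + h*K*exp K)) by (apply Rmult_le_compat_l; nra).
   assert (g * (h*K*exp (h*K)) <= g * (h*K*(1 + h*K*exp K))) by (apply Rmult_le_compat_l; lra).
   assert (g * (h*K*(h*K*exp K)) <= 1 * (h*K*(h*K*exp K))) by (apply Rmult_le_compat_r; [repeat apply Rmult_le_pos; lra| lra]).
   assert (0 <= h * h * exp 1 ^2 * iA) by (repeat apply Rmult_le_pos; try lra; nra).
   assert (0 <= h * h * K * exp 1 * iA) by (repeat apply Rmult_le_pos; lra).
   assert (0 <= h * iA) by nra.
   nra.
Qed.

Lemma sorted_of (k : Sched) :
  (forall i, (S i < length k)%nat ->
     (snd (nth i k (0%nat,0%nat)) < snd (nth (S i) k (0%nat,0%nat)))%nat) ->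
  Sorted (fun p q : nat * nat => (snd p < snd q)%nat) k.
Proof.
  induction k as [|a k IH]; intro H. constructor.
  constructor.
  - apply IH. intros i Hi. apply (H (S i)). simpl; lia.
  - destruct k as [|b k']. constructor. constructor. apply (H 0%nat). simpl; lia.
Qed.

Lemma nodup_of (k : Sched) :
  (forall i, (S i < length k)%nat ->
     (snd (nth i k (0%nat,0%nat)) < snd (nth (S i) k (0%nat,0%nat)))%nat) ->
  NoDup k.
Proof.
  intro H. apply sorted_of in H. apply Sorted_StronglySorted in H.
  2:{ intros x y z; lia. }
  induction H; constructor; auto.
  intro Hin. rewrite Forall_forall in H0. specialize (H0 a Hin). lia.
Qed.

Lemma item L net n l Cmin t : (1 <= L)%nat -> (1 <= Cmin)%nat -> (Cmin <= cap net l)%nat ->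
  beta net L n l t <= 1 ->
  INR (cap net l) * (gL L (INR (n l t + 1) / INR (cap net l)) - beta net L n l t)
  <= Kc L * beta net L n l t + (1 / Ac L + Mc L / INR Cmin).
Proof.
  intros HL HC HCl Hb. unfold beta in *.
  set (C := INR (cap net l)). set (x := INR (n l t)).
  assert (HCm: 1 <= INR Cmin) by (apply (le_INR 1); auto).
  assert (HCC: INR Cmin <= C) by (apply le_INR; auto).
  assert (E: INR (n l t + 1) / C = x / C + 1 / C) by (rewrite plus_INR; simpl; unfold x; field; lra).
  rewrite E.
  assert (Hx: 0 <= x / C) by (unfold x; apply Rmult_le_pos; [apply pos_INR| left; apply Rinv_0_lt_compat; lra]).
  assert (Hh: 0 < 1 / C <= 1).
  { split. apply Rdiv_lt_0_compat; lra. apply Rmult_le_reg_r with C; [lra|].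
    unfold Rdiv; rewrite Rmult_assoc, Rinv_l; lra. }
  pose proof (step L (x / C) (1 / C) HL Hx Hh Hb) as S.
  set (g := gL L (x / C)) in *.
  assert (HM: 0 <= Mc L).
  { unfold Mc. pose proof (Ac_pos L HL). pose proof (Kc_ge1 L HL).
    pose proof (exp_pos 1). pose proof (exp_pos (Kc L)).
    assert (0 <= exp 1 ^2 / Ac L) by (apply Rmult_le_pos; [nra| left; apply Rinv_0_lt_compat; lra]).
    assert (0 <= Kc L * exp 1 / Ac L) by (apply Rmult_le_pos; [nra| left; apply Rinv_0_lt_compat; lra]).
    nra. }
  assert (HMC: Mc L * (1 / C) <= Mc L / INR Cmin).
  { unfold Rdiv. rewrite Rmult_1_l. apply Rmult_le_compat_l; auto.
    apply Rinv_le_contravar; lra. }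
  assert (C * (gL L (x / C + 1 / C) - g) <= C * (1 / C * (Kc L * g + 1 / Ac L + Mc L * (1 / C)))).
  { apply Rmult_le_compat_l; lra. }
  replace (C * (1 / C * (Kc L * g + 1 / Ac L + Mc L * (1 / C)))) with
     (Kc L * g + 1 / Ac L + Mc L * (1 / C)) in H by (pose proof (Ac_pos L HL); field; split; lra).
  lra.
Qed.

Lemma fold_bound L net n k Cmin : (1 <= L)%nat -> (1 <= Cmin)%nat ->
 forall k', (forall p, In p k' -> In p k) ->
 (forall p, In p k -> count_occ pair_eq_dec k p = 1%nat) ->
 (forall p, In p k' -> (Cmin <= cap net (fst p))%nat) ->
 (forall p, In p k' -> beta net L n (fst p) (snd p) <= 1) ->
 fold_right (fun p acc =>
     INR (cap net (fst p)) *
       (beta net L (incr k n) (fst p) (snd p) - beta net L n (fst p) (snd p)) + acc)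
    0 k' <= Kc L * sum_beta net L n k' + INR (length k') * (1 / Ac L + Mc L / INR Cmin).
Proof.
  intros HL HC k'. induction k' as [|[l t] k' IH]; intros Hsub Hcnt Hcap Hb.
  - simpl. lra.
  - simpl fold_right. unfold sum_beta; simpl fold_right. fold (sum_beta net L n k').
    rewrite length_cons, S_INR.
    assert (Hin: In (l,t) k) by (apply Hsub; left; auto).
    assert (E: beta net L (incr k n) l t = gL L (INR (n l t + 1) / INR (cap net l))).
    { unfold beta, incr. rewrite (Hcnt _ Hin). reflexivity. }
    simpl fst; simpl snd. rewrite E.
    pose proof (item L net n l Cmin t HL HC (Hcap (l,t) ltac:(left; auto)) (Hb (l,t) ltac:(left; auto))).
    assert (IH' := IH ltac:(intros; apply Hsub; right; auto) Hcnt
               ltac:(intros; apply Hcap; right; auto) ltac:(intros; apply Hb; right; auto)).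
    lra.
Qed.

Lemma sum_beta_ge L net n k : (1 <= L)%nat ->
  (forall p, In p k -> (1 <= cap net (fst p))%nat) ->
  0 <= sum_beta net L n k /\ forall p, In p k -> beta net L n (fst p) (snd p) <= sum_beta net L n k.
Proof.
  intros HL. induction k as [|a k IH]; intro Hc.
  - simpl; split; [lra| tauto].
  - assert (Hb: 0 <= beta net L n (fst a) (snd a)).
    { unfold beta. apply gL_nonneg; auto. apply Rmult_le_pos. apply pos_INR.
      left; apply Rinv_0_lt_compat. apply lt_0_INR. specialize (Hc a (or_introl eq_refl)); lia. }
    destruct (IH ltac:(intros; apply Hc; right; auto)) as [H0 H1].
    unfold sum_beta; simpl fold_right; fold (sum_beta net L n k).
    split. lra. intros p [<-|Hp]. lra. specialize (H1 p Hp); lra.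
Qed.

Theorem lemma3 :
  forall L : nat, (1 <= L)%nat ->
  exists B : R,
  forall (net : Network) (packets : list Packet) (Cmin : nat),
    (forall l, In l (links net) -> (1 <= cap net l)%nat) ->
    (exists l, In l (links net) /\ cap net l = Cmin) ->
    (forall l, In l (links net) -> (Cmin <= cap net l)%nat) ->
    (forall m k, In m packets -> valid_schedule net m k -> (length k <= L)%nat) ->
    forall (ms : list Packet) (m : Packet) (rest : list Packet) (n : State) (k : Sched),
      packets = ms ++ m :: rest ->
      alg_run net L ms n ->
      alg_step net L n m (incr k n) (Some k) ->
      deltaD net L n k <= 2 * (ln (INR L) + 1) + B / INR Cmin.
Proof.
  intros L HL. exists (INR L * Mc L).
  intros net packets Cmin Hcap1 [l0 [Hl0 Hl0c]] HCmin Hlen ms m rest n k Hp _ Hstep.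
  inversion Hstep; subst.
  match goal with H: valid_schedule _ _ _ |- _ => rename H into Hv end. match goal with H: 0 < 1 - _ |- _ => rename H into Hpos end.
  assert (HC: (1 <= cap net l0)%nat) by auto.
  set (Cmin := cap net l0) in *.
  assert (Hk: (length k <= L)%nat).
  { apply (Hlen m); auto. apply in_or_app; right; left; auto. }
  destruct Hv as (_ & Hlinks & _ & _ & _ & _ & _ & Hinc & _).
  rewrite Forall_forall in Hlinks.
  assert (Hnd := nodup_of k Hinc).
  rewrite (NoDup_count_occ' pair_eq_dec) in Hnd.
  assert (Hc1: forall p, In p k -> (1 <= cap net (fst p))%nat) by (intros; apply Hcap1; auto).
  destruct (sum_beta_ge L net n k HL Hc1) as [Hs0 Hs1].
  assert (Hfb := fold_bound L net n k Cmin HL HC k (fun p H => H) Hnd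
     ltac:(intros; apply HCmin; auto) ltac:(intros p Hp'; specialize (Hs1 p Hp'); lra)).
  unfold deltaD.
  pose proof (Kc_ge1 L HL) as HK. pose proof (Ac_pos L HL) as HA.
  assert (HLr: 1 <= INR L) by (apply (le_INR 1); auto).
  assert (HlenR: INR (length k) <= INR L) by (apply le_INR; auto).
  assert (HCr: 1 <= INR Cmin) by (apply (le_INR 1); auto).
  assert (HM: 0 <= Mc L).
  { unfold Mc. pose proof (exp_pos 1). pose proof (exp_pos (Kc L)).
    assert (0 <= exp 1 ^2 / Ac L) by (apply Rmult_le_pos; [nra| left; apply Rinv_0_lt_compat; lra]).
    assert (0 <= Kc L * exp 1 / Ac L) by (apply Rmult_le_pos; [nra| left; apply Rinv_0_lt_compat; lra]).
    nra. }
  assert (HMC: 0 <= Mc L / INR Cmin) by (apply Rmult_le_pos; [lra| left; apply Rinv_0_lt_compat; lra]).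
  assert (HiA: 0 <= 1 / Ac L) by (apply Rmult_le_pos; [lra| left; apply Rinv_0_lt_compat; lra]).
  assert (HLA: INR L * (1 / Ac L) <= Kc L).
  { unfold Ac. set (c := 1 / Kc L).
    assert (Hc: c * Kc L = 1) by (unfold c; field; lra).
    assert (0 < c) by (unfold c; apply Rdiv_lt_0_compat; lra).
    pose proof (exp_ineq1_le c).
    replace (INR L * (1 / (INR L * (exp c - 1)))) with (1 / (exp c - 1)) by (field; lra).
    apply Rmult_le_reg_r with (exp c - 1); [lra|].
    replace (1 / (exp c - 1) * (exp c - 1)) with 1 by (field; lra). nra. }
  assert (INR (length k) * (1 / Ac L + Mc L / INR Cmin) <= INR L * (1 / Ac L) + INR L * Mc L / INR Cmin).
  { unfold Rdiv at 3 4. rewrite Rmult_plus_distr_l.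
    assert (INR (length k) * (1 / Ac L) <= INR L * (1/Ac L)) by (apply Rmult_le_compat_r; lra).
    assert (INR (length k) * (Mc L * / INR Cmin) <= INR L * (Mc L * / INR Cmin)) by (apply Rmult_le_compat_r; unfold Rdiv in HMC; lra).
    rewrite <- Rmult_assoc in H1. lra. }
  fold (Kc L).
  assert (0 <= (Kc L - 1) * (1 - sum_beta net L n k)) by (apply Rmult_le_pos; lra).
  nra.
Qed.
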